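(* Let $G=(V,E)$ be a finite directed graph, $e\in E$, and $\alpha,\beta\in\{+,-\}$. Then (i) $\mathbb{E}[R^\alpha(e_* )]=\bar R^\alpha(e_* )$ and $\mathbb{E}[R^\beta(e^* )]=\bar R^\beta(e^* )$; (ii) $\mathbb{E}[R^\alpha(e_* )R^\beta(e^* )]=\bar R^\alpha(e_* )\bar R^\beta(e^* )$.
   Context: For a directed graph $G=(V,E)$, $e_*$ and $e^*$ denote the source and target of edge $e$, $D^+(v)$ and $D^-(v)$ the out- and in-degree of $v$. For a finite sequence $(x_i)_{1\le i\le n}$ of reals, the rank is $R(x_j)=|\{i: x_i\ge x_j\}|$ and the average rank is $\bar R(x_j)=|\{i:x_i>x_j\}|+\frac{|\{i:x_i=x_j\}|+1}{2}$. Let $(U_f)_{f\in E}$ and $(W_f)_{f\in E}$ be i.i.d. copies of independent uniform random variables $U$ and $W$ on $(0,1)$. Define $R^\alpha(e_* )$ as the rank $R$ of $D^\alpha(e_* )+U_e$ within the sequence $(D^\alpha(f_* )+U_f)_{f\in E}$, and $R^\beta(e^* )$ as the rank of $D^\beta(e^* )+W_e$ within $(D^\beta(f^* )+W_f)_{f\in E}$. Define $\bar R^\alpha(e_* )$ as the average rank of $D^\alpha(e_* )$ within $(D^\alpha(f_* ))_{f\in E}$ and $\bar R^\beta(e^* )$ as the average rank of $D^\beta(e^* )$ within $(D^\beta(f^* ))_{f\in E}$. *)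

(* Defs.v *)
From HB Require Import structures.
From mathcomp Require Import all_boot all_order all_algebra.
From mathcomp Require Import all_classical all_reals all_analysis.
Set Implicit Arguments. Unset Strict Implicit. Unset Printing Implicit Defensive.
Import Order.TTheory GRing.Theory Num.Theory.
Local Open Scope classical_set_scope.
Local Open Scope ring_scope.

Inductive pm := Plus | Minus.

(* A finite directed (multi)graph is given by finite types V, E and
   source/target maps src (e_* ) and tgt (e^* ).  D^+ = out-degree,
   D^- = in-degree. *)
Definition outdeg (V E : finType) (src : E -> V) (v : V) : nat :=
  #|[set f : E | src f == v]|.
Definition indeg (V E : finType) (tgt : E -> V) (v : V) : nat :=
  #|[set f : E | tgt f == v]|.
Definition deg (V E : finType) (src tgt : E -> V) (s : pm) (v : V) : nat :=
  match s with Plus => outdeg src v | Minus => indeg tgt v end.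

Definition rank (R : realType) (I : finType) (x : I -> R) (j : I) : nat :=
  #|[set i : I | x j <= x i]|.

Definition avg_rank (R : realType) (I : finType) (x : I -> R) (j : I) : R :=
  (#|[set i : I | x j < x i]|)%:R
  + ((#|[set i : I | x i == x j]|)%:R + 1) / 2.

Definition uniform01 d (T : measurableType d) (R : realType)
  (P : probability T R) (X : T -> R) : Prop :=
  measurable_fun setT X /\
  forall B : set R, measurable B ->
    P (X @^-1` B) = lebesgue_measure (B `&` `]0, 1[).

Definition mutually_independent d (T : measurableType d) (R : realType)
  (P : probability T R) (I : finType) (X : I -> T -> R) : Prop :=
  (forall i, measurable_fun setT (X i)) /\
  forall (J : {set I}) (B : I -> set R), (forall i, measurable (B i)) ->
    P (\bigcap_(i in [set i | i \in J]) (X i @^-1` B i))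
    = (\prod_(i in J) P (X i @^-1` B i))%E.

Definition UW (T : Type) (R : realType) (E : finType) (U W : E -> T -> R)
  : (E + E)%type -> T -> R :=
  fun i => match i with inl f => U f | inr f => W f end.

(* Main.v *)
Require Import Defs.
From HB Require Import structures.
From mathcomp Require Import all_boot all_order all_algebra.
From mathcomp Require Import all_classical all_reals all_analysis.
From mathcomp Require Import measurable_realfun.
From mathcomp Require Import ring lra.
Import Order.TTheory GRing.Theory Num.Theory.
Local Open Scope classical_set_scope.
Local Open Scope ring_scope.
Set Implicit Arguments. Unset Strict Implicit. Unset Printing Implicit Defensive.
Section Ex.
Variables (R : realType) (d : measure_display) (T : measurableType d)
  (P : probability T R).

Definition Ex (h : T -> R) := (\int[P]_t (h t)%:E)%E.
Definition good (h : T -> R) := measurable_fun setT h /\ (forall t, 0 <= h t).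

Lemma goodD h1 h2 : good h1 -> good h2 -> good (fun t => h1 t + h2 t).
Proof.
move=> [m1 p1] [m2 p2]; split; first exact: measurable_funD.
by move=> t; rewrite addr_ge0.
Qed.

Lemma goodM h1 h2 : good h1 -> good h2 -> good (fun t => h1 t * h2 t).
Proof.
move=> [m1 p1] [m2 p2]; split; first exact: measurable_funM.
by move=> t; rewrite mulr_ge0.
Qed.

Lemma good_sum (I : Type) (s : seq I) (h : I -> T -> R) :
  (forall i, good (h i)) -> good (fun t => \sum_(i <- s) h i t).
Proof.
move=> H; split; first by apply: measurable_sum => i; case: (H i).
by move=> t; apply: sumr_ge0 => i _; case: (H i).
Qed.

Lemma good_cst c : 0 <= c -> good (fun _ => c).
Proof. by move=> c0; split => //; exact: measurable_cst. Qed.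

Lemma good_indic A : measurable A -> good (\1_A).
Proof. by move=> mA; split; [exact: measurable_indic|move=> t; rewrite indicE]. Qed.

Lemma mE h : good h -> measurable_fun setT (EFin \o h).
Proof. by case=> mh _; exact/measurable_EFinP. Qed.

Lemma pE h : good h -> forall t, setT t -> (0 <= (h t)%:E)%E.
Proof. by case=> _ ph t _; rewrite lee_fin. Qed.

Lemma ExD h1 h2 : good h1 -> good h2 -> Ex (fun t => h1 t + h2 t) = (Ex h1 + Ex h2)%E.
Proof.
move=> g1 g2; rewrite /Ex.
under eq_integral do rewrite EFinD.
by apply: ge0_integralD => //; [exact: pE|exact: mE|exact: pE|exact: mE].
Qed.

Lemma Ex_sum (I : Type) (s : seq I) (h : I -> T -> R) :
  (forall i, good (h i)) -> Ex (fun t => \sum_(i <- s) h i t) = (\sum_(i <- s) Ex (h i))%E.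
Proof.
move=> H; rewrite /Ex.
under eq_integral do rewrite -sumEFin.
by apply: ge0_integral_sum => // i; [exact: mE|exact: pE].
Qed.

Lemma ExZ c h : 0 <= c -> good h -> Ex (fun t => c * h t) = (c%:E * Ex h)%E.
Proof.
move=> c0 g; rewrite /Ex.
under eq_integral do rewrite EFinM.
by apply: ge0_integralZl => //; [exact: mE|exact: pE].
Qed.

Lemma Ex_le h1 h2 : good h1 -> good h2 -> (forall t, h1 t <= h2 t) -> (Ex h1 <= Ex h2)%E.
Proof.
move=> g1 g2 H; apply: ge0_le_integral => //; [exact: pE|exact: mE|exact: mE|].
by move=> t _; rewrite lee_fin.
Qed.

Lemma Ex_indic A : measurable A -> Ex (\1_A) = P A.
Proof. by move=> mA; rewrite /Ex integral_indic // setIT. Qed.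

Lemma Ex_cst c : Ex (fun _ => c) = c%:E.
Proof. rewrite /Ex integral_cst //. rewrite -[in RHS](mule1 c%:E); congr (_ * _)%E; exact: probability_setT. Qed.

End Ex.
Section Pure.
Variables (R : realType) (n : nat).
Hypothesis n0 : (0 < n)%N.

Definition kap (x : R) := Num.truncn (x * n%:R).
Definition good01 (x : R) := (0 <= x) && (x < 1).
Definition cell' (k : nat) : interval R := `[k%:R / n%:R, k.+1%:R / n%:R[.

Let n0' : (0 : R) < n%:R. Proof. by rewrite ltr0n. Qed.

Lemma incell_eq x k : (x \in cell' k) = (0 <= x) && (kap x == k).
Proof.
rewrite in_itv /= /kap.
case: (leP 0 x) => x0 /=.
  rewrite truncn_eq ?mulr_ge0 // ler_pdivrMr // ltr_pdivlMr //.
apply/negbTE; apply/negP => /andP[H _]; move: H.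
by apply/negP; rewrite -ltNge (lt_le_trans x0) // divr_ge0.
Qed.

Lemma sum_eqk m (F : nat -> R) :
  \sum_(k < n) (m == k :> nat)%:R * F k = (m < n)%:R * F m.
Proof.
case: (ltnP m n) => mn.
  rewrite (bigD1 (Ordinal mn)) //= eqxx mul1r big1 ?addr0 ?mul1r // => k.
  by rewrite -val_eqE /= eq_sym => /negbTE ->; rewrite mul0r.
rewrite mul0r big1 // => k _.
by rewrite (_ : (m == k) = false) ?mul0r //; apply/negbTE; apply: contraTneq mn => ->; rewrite -ltnNge.
Qed.

Lemma sum_cell x (F : nat -> R) :
  \sum_(k < n) (x \in cell' k)%:R * F k = (good01 x)%:R * F (kap x).
Proof.
under eq_bigr do rewrite incell_eq.
case: (leP 0 x) => x0 /=; last first.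
  by rewrite /good01 leNgt x0 /= mul0r big1 // => k _; rewrite mul0r.
rewrite sum_eqk /good01 x0 /= /kap truncn_lt_nat ?mulr_ge0 //.
by rewrite -{2}(mul1r n%:R) ltr_pM2r.
Qed.

Lemma kap_le x y : 0 <= x -> x <= y -> (kap x <= kap y)%N.
Proof.
move=> x0 xy; rewrite /kap truncn_ge_nat; last by rewrite mulr_ge0 // (le_trans x0 xy).
apply: (@le_trans _ _ (x * n%:R)); first by rewrite truncn_le mulr_ge0.
by rewrite ler_pM2r.
Qed.

Lemma kap_lt x y : 0 <= y -> (kap x < kap y)%N -> x < y.
Proof.
move=> y0 H; rewrite ltNge; apply/negP => yx.
by move: H; rewrite ltnNge kap_le.
Qed.

Lemma kap_cell x : good01 x -> x \in cell' (kap x).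
Proof. by case/andP=> x0 _; rewrite incell_eq x0 eqxx. Qed.


Definition rlt (a b : nat) := (a < b)%N.
Definition rle (a b : nat) := (a <= b)%N.

Definition Sm (r : nat -> nat -> bool) (x y : R) :=
  \sum_(k < n) \sum_(l < n) ((r k l)%:R * ((x \in cell' k)%:R * (y \in cell' l)%:R) : R).

Lemma S_val r x y : Sm r x y = (good01 x && good01 y)%:R * (r (kap x) (kap y))%:R.
Proof.
rewrite /Sm.
transitivity (\sum_(k < n) ((x \in cell' k)%:R * ((good01 y)%:R * (r k (kap y))%:R) : R)).
  apply: eq_bigr => k _; rewrite -(sum_cell y (fun l => (r k l)%:R)) mulr_sumr.
  by apply: eq_bigr => l _; rewrite mulrCA; congr (_ * _); exact: mulrC.
etransitivity; first exact: (sum_cell x (fun k => (good01 y)%:R * (r k (kap y))%:R)).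
by rewrite mulrA -natrM mulnb.
Qed.

Lemma S_lt x y : Sm rlt x y <= ((x <= y)%R)%:R.
Proof.
rewrite S_val; case/boolP: (good01 x && good01 y) => [/andP[gx gy]|]; last by rewrite mul0r.
rewrite /rlt; case/boolP: (kap x < kap y)%N => H; last by rewrite mulr0.
move: gy => /andP[y0 _]; by rewrite (ltW (kap_lt y0 H)) mulr1.
Qed.

Lemma S_le x y : ((x <= y)%R)%:R <= Sm rle x y + (~~ good01 x)%:R + (~~ good01 y)%:R.
Proof.
rewrite S_val /rle; case/boolP: (good01 x) => gx; case/boolP: (good01 y) => gy /=;
  rewrite ?mul0r ?mul1r ?add0r ?addr0 -?natrD ler_nat; last 3 first.
- by case: (x <= y)%R.
- by case: (x <= y)%R.
- by case: (x <= y)%R.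
case/boolP: (x <= y)%R => xy //=; rewrite kap_le //; by case/andP: gx.
Qed.

Definition Cnt (r : nat -> nat -> bool) := \sum_(k < n) \sum_(l < n) (r k l)%:R : R.

End Pure.

Lemma Cnt_lt (R : realType) n : Cnt R n rlt = (n%:R * (n%:R - 1)) / 2.
Proof.
rewrite /Cnt; elim: n => [|n IH]; first by rewrite !big_ord0 mul0r mul0r.
rewrite big_ord_recr /= big_ord_recr /=.
under eq_bigr do rewrite big_ord_recr /=.
rewrite big_split /= IH.
rewrite [X in _ + X + _](eq_bigr (fun _ => 1)); last by move=> i _; rewrite /rlt ltn_ord.
rewrite [X in _ + (X + _)]big1; last by move=> i _; rewrite /rlt ltnNge ltnW.
rewrite sumr_const card_ord /rlt ltnn add0r addr0.
by rewrite -natr1; field.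
Qed.

Lemma Cnt_le (R : realType) n : Cnt R n rle = (n%:R * (n%:R + 1)) / 2.
Proof.
rewrite /Cnt; elim: n => [|n IH]; first by rewrite !big_ord0 mul0r mul0r.
rewrite big_ord_recr /= big_ord_recr /=.
under eq_bigr do rewrite big_ord_recr /=.
rewrite big_split /= IH.
rewrite [X in _ + X + _](eq_bigr (fun _ => 1)); last by move=> i _; rewrite /rle ltnW.
rewrite [X in _ + (X + _)]big1; last by move=> i _; rewrite /rle leqNgt ltn_ord.
rewrite sumr_const card_ord /rle leqnn add0r.
by rewrite -natr1 /= mulr1n; field.
Qed.

Lemma squeeze_aux (R : realType) (e : R) : 0 < e ->
  exists2 m : nat, (0 < m)%N & m%:R^-1 < e.
Proof.
move=> e0; exists (Num.truncn e^-1).+1 => //.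
have m0 : (0 : R) < (Num.truncn e^-1).+1%:R by rewrite ltr0n.
rewrite invf_plt ?posrE //; exact: truncnS_gt.
Qed.

Lemma squeeze (R : realType) (v : \bar R) (q : R) :
  (forall n : nat, (0 < n)%N ->
    ((q - n%:R^-1)%:E <= v)%E /\ (v <= (q + n%:R^-1)%:E)%E) -> v = q%:E.
Proof.
move=> H; have [l1 u1] := H 1%N isT.
case: v H l1 u1 => [x| |] H l1 u1 //=.
congr EFin; apply/eqP; rewrite eq_le; apply/andP; split.
- rewrite leNgt; apply/negP => qx.
  have e0 : 0 < x - q by rewrite subr_gt0.
  have [m m0 mlt] := squeeze_aux e0.
  have [_] := H m m0; rewrite lee_fin => u.
  clear -mlt u; lra.
- rewrite leNgt; apply/negP => qx.
  have e0 : 0 < q - x by rewrite subr_gt0.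
  have [m m0 mlt] := squeeze_aux e0.
  have [+ _] := H m m0; rewrite lee_fin => l.
  clear -mlt l; lra.
Qed.


Lemma arith2 (R : realType) (m : R) : 0 < m ->
  2^-1 - m^-1 <= m * (m - 1) / 2 * (m^-1 * m^-1) /\
  m * (m + 1) / 2 * (m^-1 * m^-1) <= 2^-1 + m^-1.
Proof.
move=> m0; have mx : m * m^-1 = 1 by rewrite mulfV // gt_eqF.
have x0 : 0 < m^-1 by rewrite invr_gt0.
have -> : m * (m - 1) / 2 * (m^-1 * m^-1) =
  ((m * m^-1) * (m * m^-1) - (m * m^-1) * m^-1) / 2 by ring.
have -> : m * (m + 1) / 2 * (m^-1 * m^-1) =
  ((m * m^-1) * (m * m^-1) + (m * m^-1) * m^-1) / 2 by ring.
rewrite mx; split; lra.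
Qed.

Lemma arith4 (R : realType) (m : R) : 1 <= m ->
  4^-1 - m^-1 <= m * (m - 1) / 2 * (m * (m - 1) / 2) * ((m^-1 * m^-1) * (m^-1 * m^-1)) /\
  m * (m + 1) / 2 * (m * (m + 1) / 2) * ((m^-1 * m^-1) * (m^-1 * m^-1)) <= 4^-1 + m^-1.
Proof.
move=> m1; have m0 : 0 < m by apply: lt_le_trans m1.
have mx : m * m^-1 = 1 by rewrite mulfV // gt_eqF.
have x0 : 0 < m^-1 by rewrite invr_gt0.
have x1 : m^-1 <= 1 by rewrite invf_le1.
have -> : m * (m - 1) / 2 * (m * (m - 1) / 2) * ((m^-1 * m^-1) * (m^-1 * m^-1)) =
  ((m * m^-1) * (m * m^-1) - (m * m^-1) * m^-1) / 2 *
  (((m * m^-1) * (m * m^-1) - (m * m^-1) * m^-1) / 2) by ring.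
have -> : m * (m + 1) / 2 * (m * (m + 1) / 2) * ((m^-1 * m^-1) * (m^-1 * m^-1)) =
  ((m * m^-1) * (m * m^-1) + (m * m^-1) * m^-1) / 2 *
  (((m * m^-1) * (m * m^-1) + (m * m^-1) * m^-1) / 2) by ring.
rewrite mx; split; nra.
Qed.


Lemma Sm_bounds (R : realType) n (n0 : (0 < n)%N) r (x y : R) : 0 <= Sm n r x y <= 1.
Proof.
rewrite S_val //; case: (good01 x && good01 y); case: (r _ _); rewrite /= ?mul0r ?mul1r ?lexx ?ler01 //.
Qed.

Lemma prod_upper (R : realType) (I1 I2 U1 U2 e1 e2 : R) :
  0 <= I1 <= 1 -> 0 <= I2 <= 1 -> 0 <= U1 <= 1 -> 0 <= U2 <= 1 -> 0 <= e1 -> 0 <= e2 ->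
  I1 <= U1 + e1 -> I2 <= U2 + e2 -> I1 * I2 <= U1 * U2 + e1 + e2.
Proof.
move=> /andP[a0 a1] /andP[b0 b1] /andP[c0 c1] /andP[d0 d1] e10 e20 h1 h2.
have s1 : I1 * I2 <= (U1 + e1) * I2 by rewrite ler_wpM2r.
have s2 : U1 * I2 <= U1 * (U2 + e2) by rewrite ler_wpM2l.
have s3 : e1 * I2 <= e1 by rewrite ler_piMr.
have s4 : U1 * e2 <= e2 by rewrite ler_piMl.
nra.
Qed.


Lemma b01' (R : realType) (b : bool) : 0 <= (b%:R : R) <= 1.
Proof. by case: b; rewrite /= ?lexx ?ler01. Qed.

Lemma decisive_pt (R : realType) (c1 c2 : nat) (x y : R) : c1 != c2 ->
  let v := ((c1%:R + x <= c2%:R + y)%R)%:R : R in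
  let p := (c1 < c2)%N%:R : R in
  let b := (~~ good01 x)%:R + (~~ good01 y)%:R : R in
  v <= p + b /\ p <= v + b.
Proof.
move=> ne v p b.
have v01 : 0 <= v <= 1 by exact: b01'.
have p01 : 0 <= p <= 1 by exact: b01'.
case/boolP: (good01 x && good01 y) => [/andP[gx gy]|gb]; last first.
  have b1 : 1 <= b.
    move: gb; rewrite /b negb_and.
    by case: (good01 x); case: (good01 y) => //= _; rewrite ?add0r ?addr0 ?lexx // -natrD ler1n.
  have b0 : 0 <= b by apply: le_trans b1.
  move: v01 p01 => /andP[? ?] /andP[? ?]; split; lra.
have -> : b = 0 by rewrite /b gx gy /= add0r.
suff -> : v = p by rewrite addr0 lexx.
rewrite /v /p; congr (_%:R).
move: gx gy => /andP[x0 x1] /andP[y0 y1].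
case: (ltngtP c1 c2) => [lt|gt|eq]; last by move: ne; rewrite eq eqxx.
- suff H : c1%:R + x <= c2%:R + y by rewrite H.
  have h : (c1.+1%:R : R) <= c2%:R by rewrite ler_nat.
  move: h; rewrite -natr1 => h; lra.
- suff H : c2%:R + y < c1%:R + x by rewrite leNgt H.
  have h : (c2.+1%:R : R) <= c1%:R by rewrite ler_nat.
  move: h; rewrite -natr1 => h; lra.
Qed.

Section Cells.
Variables (R : realType) (d : measure_display) (T : measurableType d)
  (P : probability T R) (I : finType) (X : I -> T -> R).
Hypothesis hunif : forall i, uniform01 P (X i).


Lemma leb_oc (a b : R) : a < b -> lebesgue_measure ([set` `]a, b[] : set R) = (b - a)%:E.
Proof. by move=> ab; rewrite lebesgue_measure_itv/= lte_fin ab -EFinD. Qed.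

Lemma leb_cc (a b : R) : a < b -> lebesgue_measure ([set` `[a, b]] : set R) = (b - a)%:E.
Proof. by move=> ab; rewrite lebesgue_measure_itv/= lte_fin ab -EFinD. Qed.

Lemma P_cell i n k : (0 < n)%N -> (k < n)%N ->
  P (X i @^-1` [set` @cell' R n k]) = (n%:R^-1)%:E.
Proof.
move=> n0 kn; have [_ ->] := hunif i; last exact: measurable_itv.
have n0' : (0 : R) < n%:R by rewrite ltr0n.
set a : R := k%:R / n%:R; set b : R := k.+1%:R / n%:R.
have ab : a < b by rewrite ltr_pM2r ?invr_gt0 // ltr_nat.
have ba : b - a = n%:R^-1 by rewrite /a /b -mulrBl -natrB // subSnn mul1r.
have a0 : 0 <= a by rewrite /a divr_ge0.
have b1 : b <= 1 by rewrite /b ler_pdivrMr // mul1r ler_nat.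
apply/eqP; rewrite eq_le; apply/andP; split.
- rewrite -ba -leb_cc //; apply: le_measure; rewrite ?inE.
  + by apply: measurableI; exact: measurable_itv.
  + exact: measurable_itv.
  + move=> x [] /=; rewrite !in_itv /= => /andP[-> /ltW ->] _ //.
- rewrite -ba -leb_oc //; apply: le_measure; rewrite ?inE.
  + exact: measurable_itv.
  + by apply: measurableI; exact: measurable_itv.
  + move=> x /=; rewrite !in_itv /= => /andP[ax xb]; split => /=.
      by rewrite (ltW ax) xb.
    by rewrite ?in_itv /= (le_lt_trans a0 ax) (lt_le_trans xb b1).
Qed.

Lemma P_bad i : P (X i @^-1` (~` [set` `[0, 1[])) = 0%E.
Proof.
have [_ ->] := hunif i; last by apply: measurableC; exact: measurable_itv.
suff -> : (~` [set` `[(0:R), 1[]) `&` [set` `]0, 1[] = set0 by rewrite measure0.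
apply/seteqP; split => x //= [] /=; rewrite !in_itv /= => H /andP[x0 x1].
by apply: H; rewrite (ltW x0) x1.
Qed.


Lemma indic01 (A : set T) t : \1_A t = (if `[< A t >] then 1 else 0 : R).
Proof. by rewrite indicE; case: asboolP => H; [rewrite mem_set|rewrite memNset]. Qed.

Lemma good_prod (s : seq I) (A : I -> set T) : (forall i, measurable (A i)) ->
  good (fun t => \prod_(i <- s) (\1_(A i) t : R)).
Proof.
move=> mA; elim: s => [|i s IH].
  by under [X in good X]funext do rewrite big_nil; apply: good_cst.
under [X in good X]funext do rewrite big_cons.
by apply: goodM => //; apply: good_indic.
Qed.

Lemma prod_indic (s : seq I) (J : {set I}) (A : I -> set T) t :
  (forall i, (i \in J) = (i \in s)) ->
  \prod_(i <- s) (\1_(A i) t : R) = \1_(\bigcap_(i in [set i | i \in J]) A i) t.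
Proof.
move=> HJ; rewrite indic01; case: asboolP => H.
  rewrite big_seq big1 // => i; rewrite -HJ => iJ.
  by rewrite indic01 asboolT //; apply: H; rewrite /= iJ.
have [i iJ nAi] : exists2 i, i \in J & ~ A i t.
  apply: contra_notP H => H j /= jJ; apply: contra_notP H => nA.
  by exists j.
by rewrite (big_rem i) ?(HJ i) -?HJ //= indic01 asboolF // mul0r.
Qed.


Hypothesis hind : mutually_independent P X.

Lemma mpre i (B : interval R) : measurable (X i @^-1` [set` B]).
Proof.
have := (hind.1 i) measurableT _ (measurable_itv B).
by rewrite setTI.
Qed.

Lemma Ex_prod (s : seq I) (B : I -> interval R) : uniq s ->
  Ex P (fun t => \prod_(i <- s) (\1_(X i @^-1` [set` B i]) t : R))
  = (\prod_(i <- s) P (X i @^-1` [set` B i]))%E.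
Proof.
move=> us; pose J := [set i in s].
have HJ : forall i, (i \in J) = (i \in s) by move=> i; rewrite inE.
have mA : forall i, measurable (X i @^-1` [set` B i]) by move=> i; exact: mpre.
have mC : measurable (\bigcap_(i in [set i | i \in J]) (X i @^-1` [set` B i])).
  have [mf _] := good_prod s mA.
  apply/(measurable_indicP R); move: mf.
  by rewrite (funext (fun t => prod_indic _ t HJ)).
rewrite (funext (fun t => prod_indic _ t HJ)) Ex_indic //.
rewrite (hind.2 J (fun i => [set` B i])); last by move=> i; exact: measurable_itv.
by rewrite (big_uniq _ us); apply: eq_bigl => i; rewrite HJ.
Qed.


Lemma indic_itv i (J : interval R) t :
  \1_(X i @^-1` [set` J]) t = (X i t \in J)%:R :> R.
Proof. by rewrite indic01; case: asboolP => /= H; [rewrite H|move/negP/negbTE: H => ->]. Qed.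

Lemma good_itv i (J : interval R) : good (fun t => (X i t \in J)%:R : R).
Proof.
rewrite -(funext (indic_itv i J)); apply: good_indic; exact: mpre.
Qed.

Lemma Ex_prod2 i1 i2 (J1 J2 : interval R) : i1 != i2 ->
  Ex P (fun t => (X i1 t \in J1)%:R * (X i2 t \in J2)%:R : R)
  = (P (X i1 @^-1` [set` J1]) * P (X i2 @^-1` [set` J2]))%E.
Proof.
move=> ne; pose B i := if i == i1 then J1 else J2.
have u : uniq [:: i1; i2] by rewrite /= inE ne.
have E : forall i, B i = (if i == i1 then J1 else J2) by [].
have H1 : B i1 = J1 by rewrite E eqxx.
have H2 : B i2 = J2 by rewrite E eq_sym (negbTE ne).
transitivity (Ex P (fun t => \prod_(i <- [:: i1; i2]) (\1_(X i @^-1` [set` B i]) t : R))).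
  by congr Ex; apply: funext => t; rewrite !big_cons big_nil mulr1 !indic_itv H1 H2.
by rewrite Ex_prod // !big_cons big_nil mule1 H1 H2.
Qed.

Lemma Ex_prod4 i1 i2 i3 i4 (J1 J2 J3 J4 : interval R) : uniq [:: i1; i2; i3; i4] ->
  Ex P (fun t => ((X i1 t \in J1)%:R * (X i2 t \in J2)%:R) *
                 ((X i3 t \in J3)%:R * (X i4 t \in J4)%:R) : R)
  = (P (X i1 @^-1` [set` J1]) * P (X i2 @^-1` [set` J2]) *
     (P (X i3 @^-1` [set` J3]) * P (X i4 @^-1` [set` J4])))%E.
Proof.
move=> u; pose B i := if i == i1 then J1 else if i == i2 then J2
  else if i == i3 then J3 else J4.
have E : forall i, B i = if i == i1 then J1 else if i == i2 then J2
  else if i == i3 then J3 else J4 by [].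
move: (u); rewrite /= !inE !negb_or => /andP[/and3P[n12 n13 n14] /andP[/andP[n23 n24] /andP[n34 _]]].
have H1 : B i1 = J1 by rewrite E eqxx.
have H2 : B i2 = J2 by rewrite E eqxx eq_sym (negbTE n12).
have H3 : B i3 = J3 by rewrite E eqxx eq_sym (negbTE n13) eq_sym (negbTE n23).
have H4 : B i4 = J4.
  by rewrite E eq_sym (negbTE n14) eq_sym (negbTE n24) eq_sym (negbTE n34).
transitivity (Ex P (fun t => \prod_(i <- [:: i1; i2; i3; i4]) (\1_(X i @^-1` [set` B i]) t : R))).
  congr Ex; apply: funext => t; rewrite !big_cons big_nil mulr1 !indic_itv H1 H2 H3 H4.
  by rewrite !mulrA.
by rewrite Ex_prod // !big_cons big_nil mule1 H1 H2 H3 H4 !muleA.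
Qed.


Section Sums.
Variables (n : nat) (n0 : (0 < n)%N).

Lemma good_term i1 i2 (c : R) k l : 0 <= c ->
  good (fun t => c * ((X i1 t \in @cell' R n k)%:R * (X i2 t \in @cell' R n l)%:R)).
Proof. by move=> c0; apply: goodM; [exact: good_cst|apply: goodM; exact: good_itv]. Qed.

Lemma Ex_S2 r i1 i2 : i1 != i2 ->
  Ex P (fun t => Sm n r (X i1 t) (X i2 t)) = (Cnt R n r * (n%:R^-1 * n%:R^-1))%:E.
Proof.
move=> ne; rewrite /Sm.
have term : forall k l : 'I_n, Ex P (fun t => (r k l)%:R *
   ((X i1 t \in @cell' R n k)%:R * (X i2 t \in @cell' R n l)%:R))
   = ((r k l)%:R * (n%:R^-1 * n%:R^-1))%:E.
  move=> k l; rewrite ExZ //; last by apply: goodM; exact: good_itv.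
  by rewrite Ex_prod2 // !P_cell // -EFinM.
rewrite Ex_sum; last by move=> k; apply: good_sum => l; exact: good_term.
rewrite (eq_bigr (fun k : 'I_n => \sum_(l < n) ((r k l)%:R * (n%:R^-1 * n%:R^-1))%:E)); last first.
  move=> k _; rewrite Ex_sum; last by move=> l; exact: good_term.
  by apply: eq_bigr => l _; exact: term.
under eq_bigr do rewrite sumEFin.
rewrite sumEFin /Cnt mulr_suml; congr EFin; apply: eq_bigr => k _.
by rewrite mulr_suml.
Qed.

Lemma Ex_S4 r r' i1 i2 i3 i4 : uniq [:: i1; i2; i3; i4] ->
  Ex P (fun t => Sm n r (X i1 t) (X i2 t) * Sm n r' (X i3 t) (X i4 t))
  = (Cnt R n r * Cnt R n r' * ((n%:R^-1 * n%:R^-1) * (n%:R^-1 * n%:R^-1)))%:E.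
Proof.
move=> u.
pose a (i : I) (k : nat) t := ((X i t \in @cell' R n k)%:R : R).
pose F (k l k' l' : 'I_n) t := ((r k l)%:R * (r' k' l')%:R) *
   ((a i1 k t * a i2 l t) * (a i3 k' t * a i4 l' t)).
have gF : forall k l k' l', good (F k l k' l').
  move=> k l k' l'; apply: goodM; first by apply: good_cst; rewrite mulr_ge0.
  by apply: goodM; apply: goodM; exact: good_itv.
have EF : forall k l k' l', Ex P (F k l k' l') =
    ((r k l)%:R * (r' k' l')%:R * ((n%:R^-1 * n%:R^-1) * (n%:R^-1 * n%:R^-1)))%:E.
  move=> k l k' l'; rewrite /F ExZ ?mulr_ge0 //; last first.
    by apply: goodM; apply: goodM; exact: good_itv.
  by rewrite Ex_prod4 // !P_cell // -!EFinM.
transitivity (Ex P (fun t => \sum_(k < n) \sum_(l < n) \sum_(k' < n) \sum_(l' < n) F k l k' l' t)).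
  congr Ex; apply: funext => t; rewrite /Sm mulr_suml; apply: eq_bigr => k _.
  rewrite mulr_suml; apply: eq_bigr => l _; rewrite mulr_sumr; apply: eq_bigr => k' _.
  rewrite mulr_sumr; apply: eq_bigr => l' _; rewrite /F /a.
  by rewrite mulrACA.
rewrite Ex_sum; last by move=> k; do 3 (apply: good_sum => ?); exact: gF.
rewrite /Cnt mulr_suml mulr_suml -sumEFin; apply: eq_bigr => k _.
rewrite Ex_sum; last by move=> l; do 2 (apply: good_sum => ?); exact: gF.
rewrite mulr_suml mulr_suml -sumEFin; apply: eq_bigr => l _.
rewrite Ex_sum; last by move=> k'; do 1 (apply: good_sum => ?); exact: gF.
rewrite mulrAC mulr_sumr -sumEFin; apply: eq_bigr => k' _.
rewrite Ex_sum; last by move=> l'; exact: gF.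
rewrite mulr_sumr -sumEFin; apply: eq_bigr => l' _.
by rewrite EF mulrAC.
Qed.

End Sums.


Lemma bad_indic i t :
  (~~ good01 (X i t))%:R = \1_(X i @^-1` (~` [set` `[(0:R), 1[])) t :> R.
Proof.
rewrite indic01 /good01; case: asboolP => /= H.
  suff -> : ((0 <= X i t) && (X i t < 1)) = false by [].
  by apply/negbTE/negP => H'; apply: H; rewrite in_itv /= H'.
suff -> : ((0 <= X i t) && (X i t < 1)) = true by [].
by apply: contra_notT H => /negbTE H; rewrite in_itv /= H.
Qed.

Lemma mbad i : measurable (X i @^-1` (~` [set` `[(0:R), 1[])).
Proof. by rewrite preimage_setC; apply: measurableC; exact: mpre. Qed.

Lemma good_bad i : good (fun t => (~~ good01 (X i t))%:R : R).
Proof. by rewrite (funext (bad_indic i)); apply: good_indic; exact: mbad. Qed.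

Lemma Ex_bad i : Ex P (fun t => (~~ good01 (X i t))%:R : R) = 0%E.
Proof. by rewrite (funext (bad_indic i)) Ex_indic ?P_bad //; exact: mbad. Qed.

Lemma good_cmp i1 i2 (c : R) : good (fun t => ((X i1 t - X i2 t <= c)%R)%:R : R).
Proof.
have mf : measurable_fun setT (X i1 \- X i2) by apply: measurable_funB; exact: hind.1.
have mA : measurable ((X i1 \- X i2) @^-1` [set` `]-oo, c]]).
  by have := mf measurableT _ (measurable_itv `]-oo, c]); rewrite setTI.
have := @good_indic R _ _ _ mA.
by congr good; apply: funext => t; rewrite indic01; case: asboolP => /=; rewrite in_itv /= => H; [rewrite H|move/negP/negbTE: H => ->].
Qed.

Lemma good_Sm n r i1 i2 : good (fun t => Sm n r (X i1 t) (X i2 t)).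
Proof. by rewrite /Sm; apply: good_sum => k; apply: good_sum => l; exact: good_term. Qed.

Lemma ExD0 h b : good h -> good b -> Ex P b = 0%E -> Ex P (fun t => h t + b t) = Ex P h.
Proof. by move=> gh gb Eb; rewrite ExD // Eb adde0. Qed.

Lemma half2 i1 i2 : i1 != i2 ->
  Ex P (fun t => ((X i1 t - X i2 t <= 0)%R)%:R : R) = (2^-1)%:E.
Proof.
move=> ne; apply: squeeze => n n0.
have m0 : (0 : R) < n%:R by rewrite ltr0n.
split.
- apply: le_trans _ (Ex_le P (good_Sm n rlt i1 i2) (good_cmp i1 i2 0) _).
    rewrite (Ex_S2 n0) // Cnt_lt lee_fin; exact: (arith2 m0).1.
  by move=> t; rewrite subr_le0; exact: S_lt.
- pose h t := Sm n rle (X i1 t) (X i2 t) + (~~ good01 (X i1 t))%:R + (~~ good01 (X i2 t))%:R.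
  apply: le_trans (@Ex_le _ _ _ P _ h (good_cmp i1 i2 0) _ _) _.
  + by apply: goodD; [apply: goodD; [exact: good_Sm|exact: good_bad]|exact: good_bad].
  + by move=> t /=; rewrite subr_le0; exact: S_le.
  rewrite /h ExD0 //; [|by apply: goodD; [exact: good_Sm|exact: good_bad]|exact: good_bad|exact: Ex_bad].
  rewrite ExD0 //; [|exact: good_Sm|exact: good_bad|exact: Ex_bad].
  rewrite (Ex_S2 n0) // Cnt_le lee_fin; exact: (arith2 m0).2.
Qed.

Lemma b01 (b : bool) : 0 <= (b%:R : R) <= 1.
Proof. by case: b; rewrite /= ?lexx ?ler01. Qed.

Lemma half4 i1 i2 i3 i4 : uniq [:: i1; i2; i3; i4] ->
  Ex P (fun t => ((X i1 t - X i2 t <= 0)%R)%:R * ((X i3 t - X i4 t <= 0)%R)%:R : R)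
  = (4^-1)%:E.
Proof.
move=> u; apply: squeeze => n n0.
have m1 : (1 : R) <= n%:R by rewrite ler1n.
have gI : good (fun t => ((X i1 t - X i2 t <= 0)%R)%:R * ((X i3 t - X i4 t <= 0)%R)%:R : R).
  by apply: goodM; exact: good_cmp.
split.
- apply: le_trans _ (Ex_le P (goodM (good_Sm n rlt i1 i2) (good_Sm n rlt i3 i4)) gI _).
    rewrite (Ex_S4 n0) // Cnt_lt lee_fin; exact: (arith4 m1).1.
  move=> t; rewrite !subr_le0; apply: ler_pM.
  + by case/andP: (Sm_bounds n0 rlt (X i1 t) (X i2 t)).
  + by case/andP: (Sm_bounds n0 rlt (X i3 t) (X i4 t)).
  + exact: S_lt.
  + exact: S_lt.
- pose h t := Sm n rle (X i1 t) (X i2 t) * Sm n rle (X i3 t) (X i4 t)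
    + ((~~ good01 (X i1 t))%:R + (~~ good01 (X i2 t))%:R)
    + ((~~ good01 (X i3 t))%:R + (~~ good01 (X i4 t))%:R).
  have gSS := goodM (good_Sm n rle i1 i2) (good_Sm n rle i3 i4).
  have gb12 : good (fun t => (~~ good01 (X i1 t))%:R + (~~ good01 (X i2 t))%:R : R).
    by apply: goodD; exact: good_bad.
  have gb34 : good (fun t => (~~ good01 (X i3 t))%:R + (~~ good01 (X i4 t))%:R : R).
    by apply: goodD; exact: good_bad.
  have Eb12 : Ex P (fun t => (~~ good01 (X i1 t))%:R + (~~ good01 (X i2 t))%:R : R) = 0%E.
    by rewrite ExD ?Ex_bad ?adde0 //; exact: good_bad.
  have Eb34 : Ex P (fun t => (~~ good01 (X i3 t))%:R + (~~ good01 (X i4 t))%:R : R) = 0%E.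
    by rewrite ExD ?Ex_bad ?adde0 //; exact: good_bad.
  apply: le_trans (@Ex_le _ _ _ P _ h gI _ _) _.
  + by apply: goodD => //; apply: goodD.
  + move=> t; rewrite /h !subr_le0; apply: prod_upper.
    * exact: b01.
    * exact: b01.
    * exact: Sm_bounds.
    * exact: Sm_bounds.
    * by rewrite addr_ge0 ?ler0n.
    * by rewrite addr_ge0 ?ler0n.
    * by rewrite addrA; exact: S_le.
    * by rewrite addrA; exact: S_le.
  rewrite /h ExD0 //; last by apply: goodD.
  rewrite ExD0 //.
  rewrite (Ex_S4 n0) // Cnt_le lee_fin; exact: (arith4 m1).2.
Qed.

Definition cmpI i1 i2 (c1 c2 : nat) t : R := ((c1%:R + X i1 t <= c2%:R + X i2 t)%R)%:R.

Definition pv (i1 i2 : I) (c1 c2 : nat) : R :=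
  if i1 == i2 then (c1 <= c2)%N%:R else if c1 == c2 then 2^-1 else (c1 < c2)%N%:R.

Definition bb i1 i2 t : R := (~~ good01 (X i1 t))%:R + (~~ good01 (X i2 t))%:R.

Lemma good_cmpI i1 i2 c1 c2 : good (cmpI i1 i2 c1 c2).
Proof.
have := good_cmp i1 i2 (c2%:R - c1%:R); congr good; apply: funext => t.
rewrite /cmpI; congr (_%:R); congr (nat_of_bool _); apply/idP/idP => H; lra.
Qed.

Lemma good_bb i1 i2 : good (bb i1 i2).
Proof. by apply: goodD; exact: good_bad. Qed.

Lemma Ex_bb i1 i2 : Ex P (bb i1 i2) = 0%E.
Proof. by rewrite /bb ExD ?Ex_bad ?adde0 //; exact: good_bad. Qed.

Lemma pv_ge0 i1 i2 c1 c2 : 0 <= pv i1 i2 c1 c2.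
Proof. by rewrite /pv; case: ifP => _; [|case: ifP => _]; rewrite ?ler0n ?invr_ge0 ?ler0n. Qed.

Lemma cmpI01 i1 i2 c1 c2 t : 0 <= cmpI i1 i2 c1 c2 t <= 1.
Proof. exact: b01'. Qed.

Lemma bb_ge0 i1 i2 t : 0 <= bb i1 i2 t.
Proof. by rewrite /bb addr_ge0 ?ler0n. Qed.

Lemma dec_bounds i1 i2 c1 c2 t : (i1 == i2) || (c1 != c2) ->
  cmpI i1 i2 c1 c2 t <= pv i1 i2 c1 c2 + bb i1 i2 t /\
  pv i1 i2 c1 c2 <= cmpI i1 i2 c1 c2 t + bb i1 i2 t.
Proof.
have b0 := bb_ge0 i1 i2 t.
case/boolP: (i1 == i2) => [/eqP <-|ne] /= H.
  rewrite /cmpI /pv eqxx lerD2r ler_nat.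
  by split; rewrite lerDl bb_ge0.
rewrite /pv (negbTE ne) (negbTE H).
exact: (decisive_pt (X i1 t) (X i2 t) H).
Qed.

Lemma single i1 i2 c1 c2 : Ex P (cmpI i1 i2 c1 c2) = (pv i1 i2 c1 c2)%:E.
Proof.
case/boolP: ((i1 == i2) || (c1 != c2)) => [D|].
  have gp : good (fun _ : T => pv i1 i2 c1 c2) by apply: good_cst; exact: pv_ge0.
  apply/eqP; rewrite eq_le; apply/andP; split.
  - rewrite -(Ex_cst P (pv i1 i2 c1 c2)) -(ExD0 gp (good_bb i1 i2) (Ex_bb i1 i2)).
    apply: Ex_le; [exact: good_cmpI|by apply: goodD => //; exact: good_bb|].
    by move=> t; case: (dec_bounds t D).
  - rewrite -(Ex_cst P (pv i1 i2 c1 c2)) -(ExD0 (good_cmpI i1 i2 c1 c2) (good_bb i1 i2) (Ex_bb i1 i2)).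
    apply: Ex_le => //; first by apply: goodD; [exact: good_cmpI|exact: good_bb].
    by move=> t; case: (dec_bounds t D).
rewrite negb_or negbK => /andP[ne /eqP e]; subst c2.
rewrite /pv (negbTE ne) eqxx -(half2 ne); congr Ex; apply: funext => t.
by rewrite /cmpI lerD2l subr_le0.
Qed.

Lemma pair_dec i1 i2 i3 i4 c1 c2 c3 c4 : (i1 == i2) || (c1 != c2) ->
  Ex P (fun t => cmpI i1 i2 c1 c2 t * cmpI i3 i4 c3 c4 t)
  = (pv i1 i2 c1 c2 * pv i3 i4 c3 c4)%:E.
Proof.
move=> D.
have gB := good_cmpI i3 i4 c3 c4.
have gAB : good (fun t => cmpI i1 i2 c1 c2 t * cmpI i3 i4 c3 c4 t).
  by apply: goodM; exact: good_cmpI.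
have gpB : good (fun t => pv i1 i2 c1 c2 * cmpI i3 i4 c3 c4 t).
  by apply: goodM => //; apply: good_cst; exact: pv_ge0.
have E : Ex P (fun t => pv i1 i2 c1 c2 * cmpI i3 i4 c3 c4 t) = (pv i1 i2 c1 c2 * pv i3 i4 c3 c4)%:E.
  by rewrite ExZ ?pv_ge0 // single EFinM.
rewrite -E; apply/eqP; rewrite eq_le; apply/andP; split.
- rewrite -(ExD0 gpB (good_bb i1 i2) (Ex_bb i1 i2)).
  apply: Ex_le => //; first by apply: goodD => //; exact: good_bb.
  move=> t; have [h _] := dec_bounds t D.
  have := cmpI01 i3 i4 c3 c4 t; have := cmpI01 i1 i2 c1 c2 t.
  have := bb_ge0 i1 i2 t; have := pv_ge0 i1 i2 c1 c2.
  set a := cmpI i1 i2 c1 c2 t; set b := cmpI i3 i4 c3 c4 t.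
  set p := pv i1 i2 c1 c2; set e := bb i1 i2 t.
  move=> p0 e0 /andP[a0 a1] /andP[b0 b1].
  have s1 : a * b <= (p + e) * b by rewrite ler_wpM2r.
  have s2 : e * b <= e by rewrite ler_piMr.
  nra.
- rewrite -(ExD0 gAB (good_bb i1 i2) (Ex_bb i1 i2)).
  apply: Ex_le => //; first by apply: goodD => //; exact: good_bb.
  move=> t; have [_ h] := dec_bounds t D.
  have := cmpI01 i3 i4 c3 c4 t; have := cmpI01 i1 i2 c1 c2 t.
  have := bb_ge0 i1 i2 t; have := pv_ge0 i1 i2 c1 c2.
  set a := cmpI i1 i2 c1 c2 t; set b := cmpI i3 i4 c3 c4 t.
  set p := pv i1 i2 c1 c2; set e := bb i1 i2 t.
  move=> p0 e0 /andP[a0 a1] /andP[b0 b1].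
  have s1 : p * b <= (a + e) * b by rewrite ler_wpM2r.
  have s2 : e * b <= e by rewrite ler_piMr.
  nra.
Qed.

Lemma pair i1 i2 i3 i4 c1 c2 c3 c4 :
  i1 != i3 -> i1 != i4 -> i2 != i3 -> i2 != i4 ->
  Ex P (fun t => cmpI i1 i2 c1 c2 t * cmpI i3 i4 c3 c4 t)
  = (pv i1 i2 c1 c2 * pv i3 i4 c3 c4)%:E.
Proof.
move=> n13 n14 n23 n24.
case/boolP: ((i1 == i2) || (c1 != c2)) => [D|]; first exact: pair_dec.
case/boolP: ((i3 == i4) || (c3 != c4)) => [D|].
  rewrite mulrC -pair_dec // => _; congr Ex; apply: funext => t; exact: mulrC.
rewrite !negb_or !negbK => /andP[ne34 /eqP e34] /andP[ne12 /eqP e12]; subst c2 c4.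
rewrite /pv (negbTE ne12) (negbTE ne34) !eqxx.
have -> : (2^-1 * 2^-1 : R) = 4^-1 by rewrite -invfM; congr (_^-1); rewrite -natrM.
rewrite -(@half4 i1 i2 i3 i4); last by rewrite /= !inE !negb_or n13 n14 ne12 n23 n24 ne34.
by congr Ex; apply: funext => t; rewrite /cmpI !lerD2l !subr_le0.
Qed.

End Cells.


Lemma card_sum (E : finType) (p : pred E) (R : realType) :
  (#|[set f | p f]|%:R : R) = \sum_f (p f)%:R.
Proof.
rewrite -sum1_card natr_sum big_mkcond /=; apply: eq_bigr => f _.
have -> : (f \in [set f0 | p f0]) = p f by apply/idP/idP => [/set_mem //|?]; exact: mem_set.
by case: (p f).
Qed.

Lemma sum_pv (R : realType) (E : finType) (e : E) (D : E -> nat) :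
  \sum_f (if e == f then (D e <= D f)%N%:R else if D e == D f then 2^-1 else (D e < D f)%N%:R : R)
  = avg_rank (fun f => (D f)%:R : R) e.
Proof.
rewrite /avg_rank !card_sum.
transitivity (\sum_f (((D e < D f)%N)%:R + (((D f == D e))%:R + (e == f)%:R) / 2 : R)).
  apply: eq_bigr => f _; case: (eqVneq e f) => [<-|ne].
    by rewrite eqxx ltnn leqnn /=; field.
  case: (eqVneq (D e) (D f)) => [->|dn].
    by rewrite ltnn /= ?mulr1n ?mulr0n; field.
  by rewrite /= ?mulr1n ?mulr0n; field.
rewrite big_split /= -mulr_suml big_split /=.
have Se : \sum_i ((e == i)%:R : R) = 1.
  by rewrite (bigD1 e) //= eqxx big1 ?addr0 // => f /negbTE; rewrite eq_sym => ->.
rewrite Se.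
congr (_ + (_ + _) / 2).
- by apply: eq_bigr => f _; rewrite ltr_nat.
- by apply: eq_bigr => f _; rewrite eqr_nat.
Qed.

Theorem lemma4p4 (R : realType) (d : measure_display) (T : measurableType d)
  (P : probability T R) (V E : finType) (src tgt : E -> V)
  (U W : E -> T -> R)
  (hU : forall f, uniform01 P (U f)) (hW : forall f, uniform01 P (W f))
  (hind : mutually_independent P (UW U W))
  (e : E) (a b : pm) :
  let Ra := fun t => ((rank (fun f => (deg src tgt a (src f))%:R + U f t) e)%:R : R) in
  let Rb := fun t => ((rank (fun f => (deg src tgt b (tgt f))%:R + W f t) e)%:R : R) in
  let barRa := avg_rank (fun f => ((deg src tgt a (src f))%:R : R)) e in
  let barRb := avg_rank (fun f => ((deg src tgt b (tgt f))%:R : R)) e in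
  ((\int[P]_t (Ra t)%:E = barRa%:E)%E /\ (\int[P]_t (Rb t)%:E = barRb%:E)%E) /\
  (\int[P]_t (Ra t * Rb t)%:E = (barRa * barRb)%:E)%E.
Proof.
move=> Ra Rb barRa barRb.
pose X := UW U W.
have hX : forall i, uniform01 P (X i) by case.
pose da f := deg src tgt a (src f).
pose db f := deg src tgt b (tgt f).
have RaE : forall t, Ra t = \sum_f cmpI X (inl e) (inl f) (da e) (da f) t.
  by move=> t; rewrite /Ra /rank card_sum.
have RbE : forall t, Rb t = \sum_f cmpI X (inr e) (inr f) (db e) (db f) t.
  by move=> t; rewrite /Rb /rank card_sum.
have sA : \sum_f @pv R _ (inl e : E + E) (inl f) (da e) (da f) = barRa.
  by rewrite /barRa -sum_pv.
have sB : \sum_f @pv R _ (inr e : E + E) (inr f) (db e) (db f) = barRb.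
  by rewrite /barRb -sum_pv.
have gA : forall f, good (cmpI X (inl e) (inl f) (da e) (da f)).
  by move=> f; exact: (good_cmpI hind).
have gB : forall f, good (cmpI X (inr e) (inr f) (db e) (db f)).
  by move=> f; exact: (good_cmpI hind).
split; [split|].
- change (Ex P Ra = barRa%:E); rewrite (funext RaE) Ex_sum //.
  under eq_bigr do rewrite (single hX hind).
  by rewrite sumEFin sA.
- change (Ex P Rb = barRb%:E); rewrite (funext RbE) Ex_sum //.
  under eq_bigr do rewrite (single hX hind).
  by rewrite sumEFin sB.
change (Ex P (fun t => Ra t * Rb t) = (barRa * barRb)%:E).
transitivity (Ex P (fun t => \sum_f \sum_g
    cmpI X (inl e) (inl f) (da e) (da f) t * cmpI X (inr e) (inr g) (db e) (db g) t)).
  congr Ex; apply: funext => t; rewrite RaE RbE mulr_suml; apply: eq_bigr => f _.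
  by rewrite mulr_sumr.
rewrite Ex_sum; last by move=> f; apply: good_sum => g; apply: goodM.
rewrite -sA -sB mulr_suml -sumEFin; apply: eq_bigr => f _.
rewrite Ex_sum; last by move=> g; apply: goodM.
rewrite mulr_sumr -sumEFin; apply: eq_bigr => g _.
by rewrite (pair hX hind).
Qed.
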